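(* Let $n\ge1$, $m\ge0$, and let $\mathfrak{g}\subseteq\mathfrak{gl}(2n+m)$ be the seaweed of type $\frac{2n+m}{n|m|n}$, i.e. the algebra of block lower-triangular matrices with respect to diagonal blocks of sizes $n,m,n$ (so $X_{i,j}=0$ whenever $i\le n<j$, or $i\le n+m<j$). Let $F=\sum_{i,j=1}^n p_{i,j}e_{i,j}^*\in\mathfrak{gl}(n)^*$ and $G=\sum_{i,j=1}^m q_{i,j}e_{i,j}^*\in\mathfrak{gl}(m)^*$ be arbitrary. Define $\Phi,\Phi^a\in\mathfrak{g}^*$ by $$\Phi=\sum_{i,j=1}^np_{i,j}e_{i,j}^*+\sum_{i,j=1}^mq_{i,j}e_{n+i,n+j}^*+\sum_{i,j=1}^np_{i,j}e_{n+m+i,n+m+j}^*+\sum_{i=1}^ne_{n+m+i,i}^*,$$ $$\Phi^a=\sum_{i,j=1}^np_{i,j}e_{i,j}^*+\sum_{i,j=1}^mq_{i,j}e_{n+i,n+j}^*+\sum_{i,j=1}^np_{i,j}e_{2n+m+1-i,2n+m+1-j}^*+\sum_{i=1}^ne_{2n+m+1-i,i}^*.$$ Then $\ker(B_\Phi)=\{X\oplus Y\oplus X: X\in\ker(B_F),\ Y\in\ker(B_G)\}$ and $\ker(B_{\Phi^a})=\{X\oplus Y\oplus X^R: X\in\ker(B_F),\ Y\in\ker(B_G)\}$, where $X^R=A_nXA_n$ with $A_n=\sum_{i=1}^ne_{i,n+1-i}$ (i.e. $(X^R)_{i,j}=X_{n+1-i,n+1-j}$). In particular $$\dim\ker(B_\Phi)=\dim\ker(B_{\Phi^a})=\dim\ker(B_F)+\dim\ker(B_G),$$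 where $\ker(B_F)$ is computed in $\mathfrak{gl}(n)$ and $\ker(B_G)$ in $\mathfrak{gl}(m)$.
   Context: Over $\mathbb{C}$. $e_{i,j}^*(X)=X_{i,j}$. For a Lie algebra $\mathfrak{h}$ and $f\in\mathfrak{h}^*$, $B_f(x,y)=f([x,y])$ and $\ker(B_f)=\{x\in\mathfrak{h}: f([x,y])=0\ \forall y\in\mathfrak{h}\}$. $X\oplus Y\oplus Z$ denotes the block-diagonal matrix with diagonal blocks $X,Y,Z$. When $m=0$ the middle block and $G$ are absent and $\dim\ker(B_G)=0$. *)

(* Defs.v *)
(* Complex numbers are R[i] = complex R for a real closed
   field R (e.g. the real numbers); the statement is quantified over every
   such R, which in particular covers C = R[i] for R the reals. *)
From HB Require Import structures.
From mathcomp Require Import all_boot all_order all_algebra.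
From mathcomp Require Export complex.
Set Implicit Arguments. Unset Strict Implicit. Unset Printing Implicit Defensive.
Import Order.TTheory GRing.Theory Num.Theory.
Local Open Scope ring_scope.

(* A linear functional f on square matrices, given by its coefficient matrix P:
   f = sum_{i,j} P i j e_{i,j}^*, i.e. f(X) = sum_{i,j} P i j * X i j. *)
Definition pairing (C : nzRingType) (k : nat) (P X : 'M[C]_k) : C :=
  \sum_(i < k) \sum_(j < k) P i j * X i j.

(* ker(B_f) inside the Lie algebra {X | L X} (a subalgebra of gl(k)):
   X in h such that f([X,Y]) = 0 for all Y in h. *)
Definition kerB (C : nzRingType) (k : nat) (L : 'M[C]_k -> Prop) (P : 'M[C]_k)
    (X : 'M[C]_k) : Prop :=
  L X /\ forall Y, L Y -> pairing P (X *m Y - Y *m X) = 0.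

Definition gl (C : nzRingType) (k : nat) : 'M[C]_k -> Prop := fun _ => True.

(* the seaweed of type (2n+m)/(n|m|n): block lower triangular w.r.t. diagonal
   blocks of sizes n, m, n.  1-based: X_{i,j}=0 when i<=n<j or i<=n+m<j;
   0-based indices: i < n <= j or i < n+m <= j. *)
Definition seaweed (C : nzRingType) (n m : nat) : 'M[C]_(n + m + n) -> Prop :=
  fun X => forall i j : 'I_(n + m + n),
    ((i < n <= j)%N || (i < n + m <= j)%N) -> X i j = 0.

Definition blockdiag3 (C : nzRingType) (n m : nat)
    (X : 'M[C]_n) (Y : 'M[C]_m) (Z : 'M[C]_n) : 'M[C]_(n + m + n) :=
  block_mx (block_mx X 0 0 Y) 0 0 Z.

(* X^R = A_n X A_n, i.e. (X^R)_{i,j} = X_{n+1-i,n+1-j} *)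
Definition revmx (C : nzRingType) (n : nat) (X : 'M[C]_n) : 'M[C]_n :=
  \matrix_(i, j) X (rev_ord i) (rev_ord j).

(* A_n = sum_i e_{i,n+1-i} (antidiagonal identity) *)
Definition antiId (C : nzRingType) (n : nat) : 'M[C]_n :=
  \matrix_(i, j) (if (i + j == n.-1)%N then 1 else 0).

(* coefficient matrix of Phi: p on blocks (1,1) and (3,3), q on block (2,2),
   and e_{n+m+i,i}^* (i = 1..n) in the lower-left block *)
Definition PhiM (C : nzRingType) (n m : nat) (P : 'M[C]_n) (Q : 'M[C]_m)
  : 'M[C]_(n + m + n) :=
  block_mx (block_mx P 0 0 Q) 0 (row_mx (1%:M : 'M[C]_n) (0 : 'M[C]_(n, m))) P.

(* coefficient matrix of Phi^a: p_{i,j} at (2n+m+1-i,2n+m+1-j), i.e. P^R on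
   block (3,3), and e_{2n+m+1-i,i}^* i.e. A_n in the lower-left corner *)
Definition PhiaM (C : nzRingType) (n m : nat) (P : 'M[C]_n) (Q : 'M[C]_m)
  : 'M[C]_(n + m + n) :=
  block_mx (block_mx P 0 0 Q) 0 (row_mx (antiId C n) (0 : 'M[C]_(n, m)))
           (revmx P).

(* S (a subspace of 'M_k) has dimension d: S is the span of d linearly
   independent matrices (the rows of B, vectorized by mxvec). *)
Definition has_dim (C : fieldType) (k : nat) (S : 'M[C]_k -> Prop) (d : nat)
  : Prop :=
  exists B : 'M[C]_(d, k * k), row_free B /\
    forall X : 'M[C]_k, S X <-> (mxvec X <= B)%MS.

Arguments gl C k : clear implicits.
Arguments seaweed C n m : clear implicits.
Arguments antiId C n : clear implicits.

(* Main.v *)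
Require Import Defs.
From HB Require Import structures.
From mathcomp Require Import all_boot all_order all_algebra zify.
From mathcomp Require Import complex.
Set Implicit Arguments. Unset Strict Implicit. Unset Printing Implicit Defensive.
Import Order.TTheory GRing.Theory Num.Theory.
Local Open Scope ring_scope.

Section S.
Variable C : numFieldType.
Variables n m : nat.

Definition sw (A : 'M[C]_n) (B : 'M[C]_(m,n)) (Cc : 'M[C]_m) (D : 'M[C]_n)
  (E : 'M[C]_(n,m)) (F : 'M[C]_n) : 'M[C]_(n+m+n) :=
  block_mx (block_mx A 0 B Cc) 0 (row_mx D E) F.

Lemma pairing_tr k (P X : 'M[C]_k) : pairing P X = \tr (P^T *m X).
Proof.
rewrite mxtrace_mulC /pairing /mxtrace; apply: eq_bigr => i _; rewrite mxE.
by apply: eq_bigr => j _; rewrite mxE mulrC.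
Qed.

Lemma comm_formula (K : 'M[C]_n) P1 Q P3 A A' B B' Cc Cc' D D' E E' F F' :
 pairing (block_mx (block_mx P1 0 0 Q) 0 (row_mx K 0) P3)
   (sw A B Cc D E F *m sw A' B' Cc' D' E' F' - sw A' B' Cc' D' E' F' *m sw A B Cc D E F) =
 \tr (P1^T *m (A *m A' - A' *m A)) + \tr (Q^T *m (Cc *m Cc' - Cc' *m Cc))
 + \tr (P3^T *m (F *m F' - F' *m F))
 + \tr (K^T *m (D *m A' + E *m B' + F *m D' - (D' *m A + E' *m B + F' *m D))).
Proof.
rewrite pairing_tr /sw !mulmx_block !tr_block_mx !trmx0 !mul_row_block.
rewrite ?mulmx0 ?mul0mx ?addr0 ?add0r !opp_block_mx !add_block_mx.
rewrite ?mulmx_block ?tr_block_mx ?mxtrace_block.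
rewrite !mul0mx !subrr !mulmx0 !addr0 !add0r tr_row_mx trmx0 !mul_mx_row !add_row_mx opp_row_mx add_row_mx mul_col_row mxtraceD mxtrace_block !mul0mx ?mxtrace0 ?addr0.
by rewrite mxtrace_block mxtrace0 addr0 -!addrA; congr (_ + (_ + _)); exact: addrC.
Qed.

Lemma seaweed_sw Z : seaweed C n m Z -> exists A B Cc D E F, Z = sw A B Cc D E F.
Proof.
move=> hZ.
have h1 : ursubmx Z = 0.
  apply/matrixP => i j; rewrite !mxE; apply: hZ; apply/orP; right.
  by rewrite /= ltn_ord leq_addr.
have h2 : ursubmx (ulsubmx Z) = 0.
  apply/matrixP => i j; rewrite !mxE; apply: hZ; apply/orP; left.
  by rewrite /= ltn_ord leq_addr.
exists (ulsubmx (ulsubmx Z)), (dlsubmx (ulsubmx Z)), (drsubmx (ulsubmx Z)),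
  (lsubmx (dlsubmx Z)), (rsubmx (dlsubmx Z)), (drsubmx Z).
by rewrite /sw -h2 submxK hsubmxK -h1 submxK.
Qed.

Lemma sw_seaweed A B Cc D E F : seaweed C n m (sw A B Cc D E F).
Proof.
move=> i j; rewrite -(splitK i) -(splitK j) /sw.
case: (split i) => i'; case: (split j) => j' /= hc;
  rewrite ?block_mxEul ?block_mxEur ?block_mxEdl ?block_mxEdr;
  try (exfalso; move: hc (ltn_ord i') (ltn_ord j'); lia); try by rewrite mxE.
move: hc; rewrite -(splitK i') -(splitK j').
case: (split i') => i''; case: (split j') => j'' /= hc;
  rewrite ?block_mxEul ?block_mxEur ?block_mxEdl ?block_mxEdr;
  try (exfalso; move: hc (ltn_ord i'') (ltn_ord j''); lia); try by rewrite mxE.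
Qed.

Lemma bd_sw (X Z : 'M[C]_n) (Y : 'M[C]_m) : blockdiag3 X Y Z = sw X 0 Y 0 0 Z.
Proof. by rewrite /sw /blockdiag3 row_mx0. Qed.

Ltac simp := rewrite ?(mulmx0, mul0mx, subrr, oppr0, trmx1, mul1mx, mxtrace0,
  addr0, add0r, sub0r, subr0).

Lemma tr_nondeg p q (X : 'M[C]_(p,q)) :
  (forall M : 'M_(q,p), \tr (X *m M) = 0) -> X = 0.
Proof.
move=> h; apply/matrixP => i j; rewrite [RHS]mxE -(h (delta_mx j i)).
rewrite /mxtrace (bigD1 i) //= big1 ?addr0.
  rewrite mxE (bigD1 j) //= big1 ?addr0; first by rewrite mxE !eqxx mulr1.
  by move=> l hl; rewrite mxE (negbTE hl) mulr0.
by move=> k hk; rewrite mxE big1 // => l _; rewrite mxE (negbTE hk) andbF mulr0.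
Qed.

Lemma ker_Phi (P : 'M[C]_n) (Q : 'M[C]_m) Z :
  kerB (seaweed C n m) (PhiM P Q) Z <-> exists X Y,
   [/\ kerB (gl C n) P X, kerB (gl C m) Q Y & Z = blockdiag3 X Y X].
Proof.
split.
  move=> [hsw hk]; have [A [B [Cc [D [E [F hZ]]]]]] := seaweed_sw hsw; subst Z.
  have key := fun A' B' Cc' D' E' F' =>
    etrans (esym (comm_formula 1%:M P Q P A A' B B' Cc Cc' D D' E E' F F'))
      (hk _ (sw_seaweed A' B' Cc' D' E' F')).
  have hFA : F = A.
    apply/eqP; rewrite -subr_eq0; apply/eqP/tr_nondeg => M.
    have := key 0 0 0 M 0 0; simp.
    by rewrite mulmxBl !raddfB /= (mxtrace_mulC M A).
  have hE : E = 0.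
    apply/tr_nondeg => M; have := key 0 M 0 0 0 0; simp; done.
  have hB : B = 0.
    apply/tr_nondeg => M; have := key 0 0 0 0 M 0; simp.
    by rewrite raddfN /= mxtrace_mulC => /eqP; rewrite oppr_eq0 => /eqP.
  subst F E B.
  have hD : D = 0.
    apply/tr_nondeg => M.
    have h1 := key M 0 0 0 0 0; have h2 := key 0 0 0 0 0 M; simp.
    move: h1 h2; simp; rewrite raddfN /= (mxtrace_mulC M D).
    move=> h1 h2; have : \tr (D *m M) + \tr (D *m M) = 0.
      by move/eqP: h2; rewrite subr_eq0 => /eqP h2; rewrite -{1}h2.
    by rewrite -mulr2n => /eqP; rewrite mulrn_eq0 => /eqP.
  subst D.
  exists A, Cc; split.
  - split=> // Y _; rewrite pairing_tr; have := key Y 0 0 0 0 0; simp; done.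
  - split=> // Y _; rewrite pairing_tr; have := key 0 0 Y 0 0 0; simp; done.
  - by rewrite /sw /blockdiag3 row_mx0.
move=> [X [Y [[_ hX] [_ hY] ->]]]; rewrite bd_sw; split; first exact: sw_seaweed.
move=> W /seaweed_sw [A' [B' [Cc' [D' [E' [F' ->]]]]]].
rewrite (comm_formula 1%:M P Q P); simp.
rewrite -!pairing_tr hX // hY // hX // !add0r raddfB /= mxtrace_mulC subrr //.
Qed.

Notation J := (antiId C n).

Lemma antiIdE i j : J i j = (j == rev_ord i)%:R.
Proof.
rewrite !mxE; have -> : (i + j == n.-1)%N = (j == rev_ord i).
  rewrite -val_eqE /=; move: (ltn_ord i) (ltn_ord j) => hi hj.
  by apply/idP/idP => /eqP h; apply/eqP; lia.
by case: eqP.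
Qed.

Lemma antiIdE' i j : J i j = (i == rev_ord j)%:R.
Proof.
rewrite antiIdE; have -> : (j == rev_ord i) = (i == rev_ord j) by apply/idP/idP => /eqP ->; rewrite rev_ordK.
by [].
Qed.

Lemma trJ : J^T = J.
Proof. by apply/matrixP => i j; rewrite mxE antiIdE antiIdE'. Qed.

Lemma mulJ (X : 'M[C]_n) : J *m X = \matrix_(i, j) X (rev_ord i) j.
Proof.
apply/matrixP => i j; rewrite !mxE (bigD1 (rev_ord i)) //= big1 ?addr0.
  by rewrite antiIdE eqxx mul1r.
by move=> k hk; rewrite antiIdE (negbTE hk) mul0r.
Qed.

Lemma mulXJ (X : 'M[C]_n) : X *m J = \matrix_(i, j) X i (rev_ord j).
Proof.
apply/matrixP => i j; rewrite !mxE (bigD1 (rev_ord j)) //= big1 ?addr0.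
  by rewrite antiIdE' eqxx mulr1.
by move=> k hk; rewrite antiIdE' (negbTE hk) mulr0.
Qed.

Lemma JJ : J *m J = 1%:M.
Proof.
apply/matrixP => i j; rewrite mulJ [LHS]mxE antiIdE rev_ordK mxE.
by rewrite eq_sym.
Qed.

Lemma revJ (X : 'M[C]_n) : revmx X = J *m X *m J.
Proof. by rewrite mulXJ mulJ; apply/matrixP => i j; rewrite !mxE. Qed.

Lemma revmxK (X : 'M[C]_n) : revmx (revmx X) = X.
Proof. by apply/matrixP => i j; rewrite !mxE !rev_ordK. Qed.

Lemma revmxB (X Y : 'M[C]_n) : revmx (X - Y) = revmx X - revmx Y.
Proof. by apply/matrixP => i j; rewrite !mxE. Qed.

Lemma tr_revmx (X : 'M[C]_n) : (revmx X)^T = revmx X^T.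
Proof. by apply/matrixP => i j; rewrite !mxE. Qed.

Lemma revmxM (X Y : 'M[C]_n) : revmx (X *m Y) = revmx X *m revmx Y.
Proof. by rewrite !revJ -!mulmxA (mulmxA J J) JJ mul1mx. Qed.

Lemma mxtrace_rev (X : 'M[C]_n) : \tr (revmx X) = \tr X.
Proof. by rewrite revJ mxtrace_mulC mulmxA JJ mul1mx. Qed.

Lemma rev_comm (P X Y : 'M[C]_n) :
  \tr ((revmx P)^T *m (revmx X *m revmx Y - revmx Y *m revmx X)) =
  \tr (P^T *m (X *m Y - Y *m X)).
Proof. by rewrite tr_revmx -!revmxM -revmxB -revmxM mxtrace_rev. Qed.

Lemma ker_Phia (P : 'M[C]_n) (Q : 'M[C]_m) Z :
  kerB (seaweed C n m) (PhiaM P Q) Z <-> exists X Y,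
   [/\ kerB (gl C n) P X, kerB (gl C m) Q Y & Z = blockdiag3 X Y (revmx X)].
Proof.
split.
  move=> [hsw hk]; have [A [B [Cc [D [E [F hZ]]]]]] := seaweed_sw hsw; subst Z.
  have key := fun A' B' Cc' D' E' F' =>
    etrans (esym (comm_formula J P Q (revmx P) A A' B B' Cc Cc' D D' E E' F F'))
      (hk _ (sw_seaweed A' B' Cc' D' E' F')).
  have hF : F = revmx A.
    have hJF : J *m F = A *m J.
      apply/eqP; rewrite -subr_eq0; apply/eqP/tr_nondeg => M.
      have := key 0 0 0 M 0 0; simp; rewrite trJ.
      by rewrite mulmxBr mulmxBl !raddfB /= !mulmxA (mxtrace_mulC (J *m M) A) mulmxA.
    by rewrite revJ -mulmxA -hJF mulmxA JJ mul1mx.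
  have hE : E = 0.
    have : J *m E = 0.
      apply/tr_nondeg => M; have := key 0 M 0 0 0 0; simp; by rewrite trJ mulmxA.
    by move/(congr1 (mulmx J)); rewrite mulmxA JJ mul1mx mulmx0.
  have hB : B = 0.
    have : B *m J = 0.
      apply/tr_nondeg => M; have := key 0 0 0 0 M 0; simp.
      rewrite trJ mulmxN raddfN /= mulmxA (mxtrace_mulC (J *m M) B) mulmxA.
      by move/eqP; rewrite oppr_eq0 => /eqP.
    by move/(congr1 (mulmx^~ J)); rewrite -mulmxA JJ mulmx1 mul0mx.
  subst F E B.
  have hD : D = 0.
    have : J *m D = 0.
      apply/tr_nondeg => M.
      have h1 := key M 0 0 0 0 0; have h2 := key 0 0 0 0 0 (revmx M); simp.
      move: h1 h2; simp; rewrite rev_comm trJ mulmxN raddfN /=.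
      have -> : \tr (J *m (revmx M *m D)) = \tr (J *m D *m M).
        by rewrite revJ !mulmxA JJ mul1mx -mulmxA mxtrace_mulC.
      rewrite mulmxA => h1 h2; have : \tr (J *m D *m M) + \tr (J *m D *m M) = 0.
        by move/eqP: h2; rewrite subr_eq0 => /eqP h2; rewrite -{1}h2.
      by rewrite -mulr2n => /eqP; rewrite mulrn_eq0 => /eqP.
    by move/(congr1 (mulmx J)); rewrite mulmxA JJ mul1mx mulmx0.
  subst D.
  exists A, Cc; split.
  - split=> // Y _; rewrite pairing_tr; have := key Y 0 0 0 0 0; simp; done.
  - split=> // Y _; rewrite pairing_tr; have := key 0 0 Y 0 0 0; simp; done.
  - by rewrite bd_sw.
move=> [X [Y [[_ hX] [_ hY] ->]]]; rewrite bd_sw; split; first exact: sw_seaweed.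
move=> W /seaweed_sw [A' [B' [Cc' [D' [E' [F' ->]]]]]].
rewrite (comm_formula J P Q (revmx P)); simp.
rewrite -[F']revmxK rev_comm -!pairing_tr hX // hY // hX // !add0r.
rewrite pairing_tr trJ mulmxBr raddfB /= revJ !mulmxA JJ mul1mx mxtrace_mulC.
by rewrite (mxtrace_mulC D') (mxtrace_mulC (J *m D')) -mulmxA subrr.
Qed.
End S.

Section Dim.
Variable C : fieldType.

Lemma lin_mxP k N (g : 'M[C]_k -> 'M[C]_N)
  (hg : forall a x y, g (a *: x + y) = a *: g x + g y) (u : 'rV_(k * k)) :
  u *m lin1_mx (fun v => mxvec (g (vec_mx v))) = mxvec (g (vec_mx u)).
Proof.
set h := fun v => _.
have hh : forall a x y, h (a *: x + y) = a *: h x + h y.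
  by move=> a x y; rewrite /h linearP hg linearP.
have h0 : h 0 = 0.
  by have := hh (-1) 0 0; rewrite !scaleN1r oppr0 add0r addNr.
have hs : forall v : 'rV_(k * k), h v = \sum_(j < k * k) v 0 j *: h (delta_mx 0 j).
  move=> v; rewrite {1}[v]row_sum_delta.
  by elim/big_rec2: _ => // j y1 y2 _ <-; rewrite hh.
rewrite -/(h u) (hs u) {1}[u]row_sum_delta mulmx_suml; apply: eq_bigr => j _.
rewrite -scalemxAl; congr (_ *: _); rewrite -rowE; apply/rowP => i.
by rewrite !mxE.
Qed.

Lemma has_dim_sum k1 k2 N (S1 : 'M[C]_k1 -> Prop) (S2 : 'M[C]_k2 -> Prop)
  (T : 'M[C]_N -> Prop) d1 d2 (g1 : 'M_k1 -> 'M_N) (g2 : 'M_k2 -> 'M_N) :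
  (forall a x y, g1 (a *: x + y) = a *: g1 x + g1 y) ->
  (forall a x y, g2 (a *: x + y) = a *: g2 x + g2 y) ->
  (forall X Y, g1 X + g2 Y = 0 -> X = 0 /\ Y = 0) ->
  (forall Z, T Z <-> exists X Y, [/\ S1 X, S2 Y & Z = g1 X + g2 Y]) ->
  has_dim S1 d1 -> has_dim S2 d2 -> has_dim T (d1 + d2).
Proof.
move=> h1 h2 hinj hT [B1 [fr1 hS1]] [B2 [fr2 hS2]].
set M1 := lin1_mx (fun v => mxvec (g1 (vec_mx v))).
set M2 := lin1_mx (fun v => mxvec (g2 (vec_mx v))).
exists (col_mx (B1 *m M1) (B2 *m M2)); split.
  apply/inj_row_free => v.
  rewrite -[v]hsubmxK mul_row_col !mulmxA !lin_mxP // -raddfD /= => /eqP.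
  rewrite mxvec_eq0 => /eqP /hinj [X0 Y0].
  have e1 : lsubmx v *m B1 = 0 *m B1.
    by rewrite mul0mx -[lsubmx v *m B1]vec_mxK X0 linear0.
  have e2 : rsubmx v *m B2 = 0 *m B2.
    by rewrite mul0mx -[rsubmx v *m B2]vec_mxK Y0 linear0.
  by rewrite (row_free_inj fr1 e1) (row_free_inj fr2 e2) row_mx0.
move=> Z; rewrite hT; split.
  case=> X [Y [/hS1/submxP [u hu] /hS2/submxP [v hv] ->]].
  apply/submxP; exists (row_mx u v).
  by rewrite mul_row_col !mulmxA -hu -hv !lin_mxP // !mxvecK raddfD.
move/submxP => [w hw].
exists (vec_mx (lsubmx w *m B1)), (vec_mx (rsubmx w *m B2)); split.
- by apply/hS1; rewrite vec_mxK submxMl.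
- by apply/hS2; rewrite vec_mxK submxMl.
apply: (can_inj mxvecK); rewrite hw; set u := lsubmx w; set v := rsubmx w.
by rewrite -(hsubmxK w) mul_row_col !mulmxA !lin_mxP // raddfD.
Qed.
End Dim.


Section BD.
Variable C : fieldType.
Variables n m : nat.

Lemma bd_add (X X' Z Z' : 'M[C]_n) (Y Y' : 'M[C]_m) :
  blockdiag3 X Y Z + blockdiag3 X' Y' Z' = blockdiag3 (X + X') (Y + Y') (Z + Z').
Proof. by rewrite /blockdiag3 !add_block_mx !addr0. Qed.

Lemma bd_scale a (X Z : 'M[C]_n) (Y : 'M[C]_m) :
  a *: blockdiag3 X Y Z = blockdiag3 (a *: X) (a *: Y) (a *: Z).
Proof. by rewrite /blockdiag3 !scale_block_mx !scaler0. Qed.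

Lemma bd_eq0 (X Z : 'M[C]_n) (Y : 'M[C]_m) :
  blockdiag3 X Y Z = 0 -> [/\ X = 0, Y = 0 & Z = 0].
Proof.
rewrite /blockdiag3 -[0 in RHS]block_mx0 => /eq_block_mx [h _ _ ->].
by move: h; rewrite -block_mx0 => /eq_block_mx [-> _ _ ->].
Qed.

Lemma revmx_lin a (x y : 'M[C]_n) : revmx (a *: x + y) = a *: revmx x + revmx y.
Proof. by apply/matrixP => i j; rewrite !mxE. Qed.
End BD.

Theorem mainTheorem14 (R : rcfType) (n m : nat) (Hn : (1 <= n)%N)
    (P : 'M[R[i]]_n) (Q : 'M[R[i]]_m) :
  (forall Z : 'M[R[i]]_(n + m + n),
     kerB (seaweed R[i] n m) (PhiM P Q) Z <->
     exists (X : 'M[R[i]]_n) (Y : 'M[R[i]]_m),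
       [/\ kerB (gl R[i] n) P X, kerB (gl R[i] m) Q Y & Z = blockdiag3 X Y X])
  /\
  (forall Z : 'M[R[i]]_(n + m + n),
     kerB (seaweed R[i] n m) (PhiaM P Q) Z <->
     exists (X : 'M[R[i]]_n) (Y : 'M[R[i]]_m),
       [/\ kerB (gl R[i] n) P X, kerB (gl R[i] m) Q Y &
           Z = blockdiag3 X Y (revmx X)])
  /\
  (forall d1 d2 : nat,
     has_dim (kerB (gl R[i] n) P) d1 ->
     has_dim (kerB (gl R[i] m) Q) d2 ->
     has_dim (kerB (seaweed R[i] n m) (PhiM P Q)) (d1 + d2) /\
     has_dim (kerB (seaweed R[i] n m) (PhiaM P Q)) (d1 + d2)).
Proof.
split; first by move=> Z; apply: ker_Phi.
split; first by move=> Z; apply: ker_Phia.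
move=> d1 d2 h1 h2; split.
- apply: (has_dim_sum (g1 := fun X => blockdiag3 X 0 X)
            (g2 := fun Y => blockdiag3 0 Y 0) _ _ _ _ h1 h2).
  + by move=> a x y; rewrite bd_scale bd_add scaler0 addr0.
  + by move=> a x y; rewrite bd_scale bd_add scaler0 addr0.
  + by move=> X Y; rewrite bd_add addr0 add0r => /bd_eq0 [-> -> _].
  + move=> Z; rewrite ker_Phi; split; case=> X [Y [h3 h4 ->]]; exists X, Y;
      by split=> //; rewrite bd_add addr0 add0r.
- apply: (has_dim_sum (g1 := fun X => blockdiag3 X 0 (revmx X))
            (g2 := fun Y => blockdiag3 0 Y 0) _ _ _ _ h1 h2).
  + by move=> a x y; rewrite bd_scale bd_add scaler0 addr0 revmx_lin.
  + by move=> a x y; rewrite bd_scale bd_add scaler0 addr0.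
  + by move=> X Y; rewrite bd_add addr0 add0r => /bd_eq0 [-> -> _].
  + move=> Z; rewrite ker_Phia; split; case=> X [Y [h3 h4 ->]]; exists X, Y;
      by split=> //; rewrite bd_add !addr0 add0r.
Qed.
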